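(* Let $H$ be a $3$-graph with $s$ vertices, let $t\geq 1$, and let $G$ be a $3$-graph that is $H\sqcup S_{2,t}$-free. Let $v_1,v_2\in V(G)$ be distinct. If $G-\{v_1\}$ contains a copy of $H$ and $G-\{v_1,v_2\}$ contains no copy of $H$, then $\omega\big((G-\{v_2\})_{v_1}\big)\leq s+t-1$.
   Context: A $3$-graph $G$ is $F$-free if it contains no subgraph isomorphic to $F$. $S_{2,t}$ is the $3$-graph with vertex set $\{w_1,w_2,u_1,\dots,u_t\}$ and edge set $\{w_1w_2u_1,\dots,w_1w_2u_t\}$. $\sqcup$ denotes vertex-disjoint union. For $S\subseteq V(G)$, $G-S$ is the subgraph of $G$ induced by $V(G)\setminus S$. For a $3$-graph $G'$ and $v\in V(G')$, the link graph of $v$ is the $2$-graph $G'_v=\{ab: vab\in E(G')\}$, and $\omega(\cdot)$ denotes the order of a maximum clique of a $2$-graph. *)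

(* Defs.v *)
From mathcomp Require Import all_boot.
Set Implicit Arguments. Unset Strict Implicit. Unset Printing Implicit Defensive.

Definition is_3graph (V : finType) (VG : {set V}) (E : {set {set V}}) : Prop :=
  forall e, e \in E -> e \subset VG /\ #|e| = 3.

Definition contains_copy (W V : finType) (VH : {set W}) (EH : {set {set W}})
  (VG : {set V}) (EG : {set {set V}}) : Prop :=
  exists f : W -> V,
    {in VH &, injective f} /\ (forall x, x \in VH -> f x \in VG) /\
    (forall e, e \in EH -> f @: e \in EG).

Definition del_vert (V : finType) (S : {set V}) (VG : {set V}) : {set V} := VG :\: S.
Definition del_edges (V : finType) (S : {set V}) (VG : {set V}) (EG : {set {set V}})
  : {set {set V}} := [set e in EG | e \subset VG :\: S].

(* S_{2,t} on vertex type bool + 'I_t : w1 = inl true, w2 = inl false, u_i = inr i. *)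
Definition S2t_vert (t : nat) : {set (bool + 'I_t)%type} := setT.
Definition S2t_edges (t : nat) : {set {set (bool + 'I_t)%type}} :=
  [set [set inl true; inl false; inr i] | i : 'I_t].

Definition dunion_vert (W U : finType) (VH : {set W}) (VF : {set U}) : {set (W + U)%type} :=
  ((inl : W -> (W + U)%type) @: VH) :|: ((inr : U -> (W + U)%type) @: VF).
Definition dunion_edges (W U : finType) (EH : {set {set W}}) (EF : {set {set U}})
  : {set {set (W + U)%type}} :=
  [set (inl : W -> (W + U)%type) @: e | e : {set W} in EH] :|: [set (inr : U -> (W + U)%type) @: e | e : {set U} in EF].

Definition link_vert (V : finType) (VG : {set V}) (v : V) : {set V} := VG :\ v.
Definition link_edges (V : finType) (EG : {set {set V}}) (v : V) : {set {set V}} :=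
  [set (e :\ v) | e : {set V} in EG & v \in e].

Definition is_clique (V : finType) (VL : {set V}) (EL : {set {set V}}) (K : {set V}) : bool :=
  (K \subset VL) && [forall a in K, forall b in K, (a != b) ==> ([set a; b] \in EL)].
Definition clique_number (V : finType) (VL : {set V}) (EL : {set {set V}}) : nat :=
  \max_(K : {set V} | is_clique VL EL K) #|K|.

(* Main.v *)
Require Import Defs.
From mathcomp Require Import all_boot.
From mathcomp Require Import zify.

Theorem claim3p6 (W V : finType) (VH : {set W}) (EH : {set {set W}}) (s t : nat)
  (VG : {set V}) (EG : {set {set V}}) (v1 v2 : V) :
  is_3graph VH EH -> #|VH| = s -> 1 <= t ->
  is_3graph VG EG ->
  ~ contains_copy (dunion_vert VH (S2t_vert t)) (dunion_edges EH (S2t_edges t)) VG EG ->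
  v1 \in VG -> v2 \in VG -> v1 != v2 ->
  contains_copy VH EH (del_vert [set v1] VG) (del_edges [set v1] VG EG) ->
  ~ contains_copy VH EH (del_vert [set v1; v2] VG) (del_edges [set v1; v2] VG EG) ->
  clique_number
    (link_vert (del_vert [set v2] VG) v1)
    (link_edges (del_edges [set v2] VG EG) v1) <= s + t - 1.
Proof.
move=> H3 Hs Ht G3 Hfree v1G v2G v12 [f [finj [fV fE]]] Hno.
rewrite /clique_number; apply/bigmax_leqP => K /andP[KV /forallP Kcl].
rewrite leqNgt; apply/negP => HK.
have v2f : v2 \in f @: VH.
  apply/negPn/negP => nv2; apply: Hno; exists f; split; first by [].
  have fV2 : forall x, x \in VH -> f x \in del_vert [set v1; v2] VG.
    move=> x xH; have := fV x xH; rewrite /del_vert !inE => /andP[h1 h2]; idtac.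
    rewrite h2 andbT negb_or h1 /=. apply/eqP => e; move/negP: nv2; apply; rewrite -e; exact: imset_f.
  split; first exact: fV2.
  move=> e eH; rewrite /del_edges inE; have := fE e eH; rewrite /del_edges inE => /andP[-> _] /=.
  apply/subsetP => y /imsetP[x xe ->]; apply: fV2; have [sub _] := H3 e eH; exact: (subsetP sub).
have Kin : forall a, a \in K -> [&& a != v1, a != v2 & a \in VG].
  by move=> a aK; have := subsetP KV a aK; rewrite /link_vert /del_vert !inE.
have Kedge : forall a b, a \in K -> b \in K -> a != b -> [set v1; a; b] \in EG.
  move=> a b aK bK ab; have := Kcl a; rewrite aK /= => /forallP /(_ b); rewrite bK ab /=.
  rewrite /link_edges => /imsetP[e]; rewrite !inE => /andP[/andP[eG _] v1e] eab.
  have -> : [set v1; a; b] = v1 |: [set a; b] by apply/setP => x; rewrite !inE orbA.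
  by rewrite eab setD1K.
have fnv1 : forall a, a \in VH -> f a != v1.
  by move=> a aH; have := fV a aH; rewrite /del_vert !inE => /andP[].
set B := K :\: f @: VH.
have cardB : t < #|B|.
  have : #|K :&: f @: VH| < s.
    have sub : K :&: f @: VH \subset (f @: VH) :\ v2.
      apply/subsetP => y; rewrite !inE => /andP[yK yf]; rewrite yf andbT.
      by have /and3P[_ -> _] := Kin y yK.
    have := subset_leq_card sub; have := cardsD1 v2 (f @: VH); rewrite v2f.
    have := leq_imset_card f VH. rewrite Hs. lia.
  rewrite /B cardsD. lia.
have : 0 < #|B| by lia.
move/card_gt0P => [w wB].
have := wB; rewrite /B inE => /andP[wf wK].
have tA : t <= #|B :\ w| by have := cardsD1 w B; rewrite wB; lia.
set A := B :\ w.
pose u := fun i : 'I_t => enum_val (widen_ord tA i).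
have uA : forall i, [&& u i != w, u i \notin f @: VH & u i \in K].
  move=> i; have := enum_valP (widen_ord tA i); rewrite /A /B !inE //.
have uinj : forall i j, u i = u j -> i = j.
  move=> i j /enum_val_inj [] e; apply: val_inj; exact: e.
pose g := fun x : (W + (bool + 'I_t))%type => match x with
  | inl a => f a | inr (inl true) => v1 | inr (inl false) => w | inr (inr i) => u i end.
have inlV : forall a, inl a \in dunion_vert VH (S2t_vert t) -> a \in VH.
  by move=> a; rewrite /dunion_vert inE => /orP[/imsetP[a' ? [->]]|/imsetP[? ? //]].
apply: Hfree; exists g; split; [|split].
- have wv1 : w != v1 by have /and3P[] := Kin w wK.
  have uv1 : forall i, u i != v1.
    by move=> i; have /and3P[_ _ /Kin /and3P[]] := uA i.
  have uw : forall i, u i != w by move=> i; have /and3P[] := uA i.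
  have uf : forall i a, a \in VH -> f a != u i.
    move=> i a aH; apply/eqP => e; have /and3P[_ + _] := uA i; rewrite -e imset_f //.
  have wf' : forall a, a \in VH -> f a != w.
    by move=> a aH; apply/eqP => e; move: wf; rewrite -e imset_f.
  move=> [a|[[]|i]] [b|[[]|j]] ha hb //= e.
  all: try (move: (inlV _ ha) => aH).
  all: try (move: (inlV _ hb) => bH).
  all: try (by congr inl; apply: finj).
  all: try (by rewrite (uinj _ _ e)).
  all: try (by move/eqP: e; rewrite ?(negbTE (fnv1 _ aH)) ?(negbTE (wf' _ aH)) ?(negbTE (uf _ _ aH))).
  all: try (by move/eqP: e; rewrite eq_sym ?(negbTE (fnv1 _ bH)) ?(negbTE (wf' _ bH)) ?(negbTE (uf _ _ bH))).
  all: try (by move/eqP: e; rewrite ?(negbTE (uv1 _)) ?(negbTE (uw _)) ?(negbTE wv1)).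
  all: try (by move/eqP: e; rewrite eq_sym ?(negbTE (uv1 _)) ?(negbTE (uw _)) ?(negbTE wv1)).

- move=> [a|[[]|i]] hx //=.
  + by have := fV a (inlV _ hx); rewrite /del_vert inE => /andP[].
  + by have /and3P[] := Kin w wK.
  + by have /and3P[_ _ /Kin /and3P[]] := uA i.
- move=> e; rewrite /dunion_edges inE => /orP[/imsetP[e' e'H ->]|/imsetP[e' /imsetP[i _ ->] ->]].
  + rewrite -imset_comp. have := fE e' e'H; rewrite /del_edges inE => /andP[+ _].
    congr (_ \in _); apply: eq_imset => x //.
  + rewrite -imset_comp.
    have -> : (g \o inr) @: [set inl true; inl false; inr i] = [set v1; w; u i].
      by rewrite ?imsetU ?imsetU1 !imset_set1.
    have /and3P[uw _ uK] := uA i.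
    by apply: Kedge => //; rewrite eq_sym.
Qed.
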